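(* Let $\varphi\colon\mathcal{M}\to\mathcal{X}$ be a smooth lift and let $y\in\mathcal{M}$. Then $\varphi$ satisfies the ''local $\Rightarrow$ local'' property at $y$ if and only if $\varphi$ is open at $y$. Moreover, if $\varphi$ does not satisfy ''local $\Rightarrow$ local'' at $y$, then there is a smooth cost $f$ such that $y$ is a local minimum of $g=f\circ\varphi$ on $\mathcal{M}$ but $\varphi(y)$ is not a local minimum of $f$ on $\mathcal{X}$.
   Context: Let $\mathcal{E}$ be a finite-dimensional real inner product space and $\mathcal{M}$ a smooth manifold. A smooth lift of a set $\mathcal{X}\subseteq\mathcal{E}$ is a smooth map $\varphi\colon\mathcal{M}\to\mathcal{E}$ with $\varphi(\mathcal{M})=\mathcal{X}$. $\mathcal{X}$ carries the subspace topology from $\mathcal{E}$. For a cost $f$ on $\mathcal{X}$ put $g=f\circ\varphi$; local minima of $f$ on $\mathcal{X}$ (resp. of $g$ on $\mathcal{M}$) are points minimizing the function over some neighborhood in $\mathcal{X}$ (resp. $\mathcal{M}$). The lift satisfies ''local $\Rightarrow$ local'' at $y$ if for every continuous $f\colon\mathcal{X}\to\mathbb{R}$, whenever $y$ is a local minimum of $g$ on $\mathcal{M}$, $\varphi(y)$ is a local minimum of $f$ on $\mathcal{X}$. The map $\varphi$ is open at $y$ if it maps every neighborhood of $y$ in $\mathcal{M}$ to a neighborhood of $\varphi(y)$ in $\mathcal{X}$ (a neighborhood of a point is a set containing it in its interior). *)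

(* Defs.v *)
From HB Require Import structures.
From mathcomp Require Import all_boot all_order all_algebra.
From mathcomp Require Import all_classical all_reals all_analysis.
Set Implicit Arguments. Unset Strict Implicit. Unset Printing Implicit Defensive.
Import Order.TTheory GRing.Theory Num.Theory.
Import numFieldNormedType.Exports.
Local Open Scope classical_set_scope.
Local Open Scope ring_scope.

Definition iterD (R : realType) (V W : normedModType R)
  (vs : seq V) (f : V -> W) : V -> W :=
  foldr (fun v g => 'D_v g) f vs.

Definition smooth_on (R : realType) (V W : normedModType R)
  (A : set V) (f : V -> W) : Prop :=
  open A /\
  forall vs : seq V,
    (forall x, A x -> {for x, continuous (iterD vs f)}) /\
    (forall v x, A x -> derivable (iterD vs f) x v).

Record chart (R : realType) (d : nat) (M : topologicalType) := Chart {
  ch_dom : set M;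
  ch_map : M -> 'rV[R]_d;
  ch_inv : 'rV[R]_d -> M }.

Definition is_chart (R : realType) (d : nat) (M : topologicalType)
  (c : chart R d M) : Prop :=
  [/\ open (ch_dom c),
      open (ch_map c @` ch_dom c),
      (forall x, ch_dom c x -> ch_inv c (ch_map c x) = x),
      {within ch_dom c, continuous (ch_map c)} &
      {within ch_map c @` ch_dom c, continuous (ch_inv c)}].

Definition smooth_atlas (R : realType) (d : nat) (M : topologicalType)
  (At : set (chart R d M)) : Prop :=
  [/\ (forall c, At c -> is_chart c),
      (forall x : M, exists2 c, At c & ch_dom c x) &
      (forall c1 c2, At c1 -> At c2 ->
         smooth_on (ch_map c1 @` (ch_dom c1 `&` ch_dom c2))
                   (ch_map c2 \o ch_inv c1))].

Definition smooth_manifold (R : realType) (d : nat) (M : topologicalType)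
  (At : set (chart R d M)) : Prop :=
  [/\ hausdorff_space M, @second_countable M & smooth_atlas At].

Definition smooth_map (R : realType) (d : nat) (M : topologicalType)
  (At : set (chart R d M)) (E : normedModType R) (phi : M -> E) : Prop :=
  forall c, At c -> smooth_on (ch_map c @` ch_dom c) (phi \o ch_inv c).

Definition nbhs_in (T : topologicalType) (X : set T) (p : T) (S : set T) :=
  X p /\ exists2 V, nbhs p V & V `&` X `<=` S.

Definition local_min_in (R : realType) (T : topologicalType) (X : set T)
  (f : T -> R) (p : T) : Prop :=
  X p /\ exists2 S, nbhs_in X p S & forall x, S x -> X x -> f p <= f x.

Definition local_min (R : realType) (M : topologicalType) (g : M -> R) (y : M) :=
  exists2 U, nbhs y U & forall u, U u -> g y <= g u.

Definition open_at (M E : topologicalType) (phi : M -> E) (y : M) : Prop :=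
  forall N, nbhs y N -> nbhs_in (range phi) (phi y) (phi @` N).

Definition local_local (R : realType) (M E : topologicalType)
  (phi : M -> E) (y : M) : Prop :=
  forall f : E -> R, {within range phi, continuous f} ->
    local_min (f \o phi) y -> local_min_in (range phi) f (phi y).

(* Main.v *)
From Pilot Require Import Defs.
From HB Require Import structures.
From mathcomp Require Import all_boot all_order all_algebra.
From mathcomp Require Import all_classical all_reals all_analysis.
From mathcomp Require Import ring lra.
Import Order.TTheory GRing.Theory Num.Theory.
Import numFieldNormedType.Exports.
Local Open Scope classical_set_scope.
Local Open Scope ring_scope.
Set Implicit Arguments. Unset Strict Implicit. Unset Printing Implicit Defensive.
Notation iterD := Pilot.Defs.iterD.

Section Gen.
Variables (R : realType) (V : normedModType R).

Lemma quot_small (q : R -> R) (K : R) :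
  (forall h, `|q h| <= K * `|h|) -> q @ 0^' --> 0.
Proof.
move=> Hq; apply/cvgr0Pnorm_lt => e e0.
have K1 : 0 < `|K| + 1 by rewrite ltr_pwDr // ?normr_ge0.
near=> h.
apply: (le_lt_trans (Hq h)).
apply: (le_lt_trans (ler_wpM2r (normr_ge0 h) (ler_norm K))).
apply: (le_lt_trans (ler_wpM2r (normr_ge0 h) (ler_wpDr ler01 (lexx `|K|)))).
rewrite mulrC -ltr_pdivlMr //.
near: h; exact: dnbhs0_lt (divr_gt0 e0 K1).
Unshelve. all: by end_near. Qed.

Lemma is_derive_small (G : V -> R) p v K : 0 <= K ->
  G p = 0 -> (forall z, `|G z| <= K * `|z - p| ^+ 2) -> is_derive p v G 0.
Proof.
move=> K0 Gp HG.
have Hc : (fun h : R => h^-1 *: ((G \o shift p) (h *: v) - G p)) @ 0^' --> (0:R).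
  apply: (@quot_small _ (K * `|v| ^+ 2)) => h.
  rewrite Gp subr0 /= normrZ normfV.
  have [->|h0] := eqVneq h 0; first by rewrite normr0 invr0 mul0r mulr0.
  rewrite ler_pdivrMl ?normr_gt0 //.
  apply: (le_trans (HG _)); rewrite addrK normrZ exprMn.
  rewrite !mulrA [_ * K]mulrC -!mulrA; apply: ler_wpM2l => //.
  by apply: (le_trans (le_refl _)); rewrite le_eqVlt; apply/orP; left; apply/eqP; ring.
have Hd : derivable G p v by apply/cvg_ex; exists 0.
split => //; exact: cvg_lim.
Qed.
End Gen.

Section Flat.
Variable R : realType.

Definition ef (P : {poly R}) (t : R) : R :=
  if 0 < t then P.[t^-1] * expR (- t^-1) else 0.
Definition dP (P : {poly R}) : {poly R} := 'X^2 * (P - P^`()).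

Lemma ef_le0 P t : t <= 0 -> ef P t = 0.
Proof. by rewrite /ef leNgt => /negbTE ->. Qed.

Lemma poly_bound (P : {poly R}) : exists K, 0 <= K /\
  forall s, 0 <= s -> `|P.[s]| <= K * (1 + s ^+ size P).
Proof.
exists (\sum_(i < size P) `|P`_i|); split; first by apply: sumr_ge0 => i _.
move=> s s0; rewrite horner_coef mulr_suml.
apply: (le_trans (ler_norm_sum _ _ _)); apply: ler_sum => i _.
rewrite normrM ler_wpM2l // normrX ger0_norm //.
have [s1|s1] := leP s 1.
  by apply: (le_trans (exprn_ile1 _ s0 s1)); rewrite lerDl exprn_ge0.
apply: (le_trans (ler_weXn2l (ltW s1) (ltnW (ltn_ord i)))).
lra.
Qed.

Lemma exp_poly_bound (N : nat) : exists C : R, 0 < C /\ forall s : R, 0 < s ->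
  (1 + s ^+ N) * expR (- s) <= C / s /\ (1 + s ^+ N) * expR (- s) <= C.
Proof.
set F := (N.+1)`!%:R : R.
have F1 : 1 <= F by rewrite /F ler1n fact_gt0.
exists (2 * F); split; first by rewrite mulr_gt0 // (lt_le_trans ltr01 F1).
move=> s s0.
have e0 : 0 < expR (- s) := expR_gt0 _.
have [s1|s1] := leP s 1.
  have a1 : 1 + s ^+ N <= 2 by have := exprn_ile1 N (ltW s0) s1; lra.
  have a2 : expR (- s) <= 1 by rewrite expR_le1 oppr_le0 ltW.
  have h1 := ler_pM (addr_ge0 ler01 (exprn_ge0 N (ltW s0))) (ltW e0) a1 a2.
  rewrite mulr1 in h1.
  split; apply: (le_trans h1); last by lra.
  by rewrite ler_pdivlMr //; lra.
have sN : 1 + s ^+ N <= 2 * s ^+ N.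
  by rewrite mulrDl mul1r lerD2r exprn_ege1 // ltW.
have es : s ^+ N.+1 / F <= expR s.
  apply: (le_trans _ (expR_ge1Dxn N (ltW s0))); by rewrite lerDr.
have key : s ^+ N * expR (- s) <= F / s.
  have F0 : 0 < F by exact: (lt_le_trans ltr01 F1).
  rewrite expRN ler_pdivrMr ?expR_gt0 // mulrAC ler_pdivlMr // -exprSr.
  by move: es; rewrite ler_pdivrMr // mulrC.
have k1 : (1 + s ^+ N) * expR (- s) <= 2 * F / s.
  apply: (le_trans (ler_wpM2r (ltW e0) sN)).
  by rewrite -mulrA -mulrA ler_wpM2l // mulrA.
split => //; apply: (le_trans k1).
rewrite ler_pdivrMr //; nra.
Qed.

Lemma ef_bound (P : {poly R}) : exists K, 0 <= K /\
  forall t, `|ef P t| <= K /\ `|ef P t| <= K * `|t|.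
Proof.
have [K [K0 HK]] := poly_bound P.
have [C [C0 HC]] := exp_poly_bound (size P).
exists (K * C); split; first by rewrite mulr_ge0 // ltW.
move=> t; have [t0|t0] := leP t 0.
  by rewrite ef_le0 // normr0 mulr_ge0 ?mulr_ge0 // ltW.
have s0 : 0 < t^-1 by rewrite invr_gt0.
rewrite /ef t0 normrM [`|expR _|]ger0_norm ?expR_ge0 //.
have h := ler_wpM2r (expR_ge0 (- t^-1)) (HK _ (ltW s0)).
have [h1 h2] := HC _ s0.
split; apply: (le_trans h); rewrite -mulrA.
  by rewrite ler_wpM2l.
rewrite -mulrA ler_wpM2l // gtr0_norm //; by move: h1; rewrite invrK.
Qed.

Lemma ef_sq (P : {poly R}) : exists K, 0 <= K /\
  forall t, `|ef P t| <= K * `|t - 0| ^+ 2.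
Proof.
have [K [K0 HK]] := ef_bound ('X * P).
exists K; split => // t; rewrite subr0.
have [t0|t0] := leP t 0.
  by rewrite ef_le0 // normr0 mulr_ge0 // exprn_ge0.
have -> : ef P t = t * ef ('X * P) t.
  rewrite /ef t0 hornerM hornerX mulrA mulrA mulfV ?mul1r //.
  by rewrite gt_eqF.
rewrite normrM expr2 mulrA [K * _]mulrC -mulrA ler_wpM2l //.
by case: (HK t).
Qed.

Lemma ef0 P : ef P 0 = 0.
Proof. by rewrite ef_le0. Qed.

Lemma ef_derive (P : {poly R}) (t : R) : is_derive t (1:R) (ef P) (ef (dP P) t).
Proof.
have [t0|t0|->] := ltgtP t 0.
- rewrite ef_le0 ?ltW //.
  apply: (@near_eq_is_derive _ _ _ (cst 0) (ef P) t 1 0).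
  near=> z; rewrite /cst ef_le0 //; apply: ltW.
  near: z; exact: lt_nbhsl.
- have hpos : \forall z \near t, 0 < z.
    have : - t < 0 by rewrite oppr_lt0.
    move/Nlt_nbhsl; apply: filterS => z; by rewrite oppr_lt0.
  pose g := fun z : R => P.[z^-1] * expR (- z^-1).
  apply: (@near_eq_is_derive _ _ _ g).
    by near=> z; rewrite /ef (near hpos z).
  have tn0 : t != 0 by rewrite gt_eqF.
  have hi : is_derive t 1 (fun z : R => z^-1) (- t ^- 2 *: 1).
    exact: (@is_deriveV R id t 1 1 tn0 (is_derive_id _ _)).
  have hp : is_derive t 1 (horner P \o (fun z : R => z^-1)) (P^`().[t^-1] * (- t ^- 2 *: 1)).
    exact: is_derive1_comp.
  have hn : is_derive t 1 (fun z : R => - z^-1) (- (- t ^- 2 *: 1)).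
    exact: is_deriveN.
  have he : is_derive t 1 (expR \o (fun z : R => - z^-1)) (expR (- t^-1) * (- (- t ^- 2 *: 1))).
    exact: is_derive1_comp.
  have := is_deriveM hp he.
  rewrite /ef t0 /dP => H.
  have Eg : g = (horner P \o (fun z : R => z^-1)) * (expR \o (fun z : R => - z^-1)).
    by apply/funext => z.
  rewrite Eg; apply: (is_derive_eq H).
  rewrite /= hornerM hornerXn hornerD hornerN /GRing.scale /= !mulr1 exprVn.
  ring.
- rewrite ef0; have [K [K0 HK]] := ef_sq P.
  exact: (@is_derive_small R R^o (ef P) 0 1 K K0 (ef0 P) HK).
Unshelve. all: by end_near. Qed.

End Flat.

Section Syn.
Variables (R : realType) (n : nat).
Local Notation V := 'rV[R]_n.

Inductive ex :=
 | ECst of R | ECrd of 'I_n | EAdd of ex & ex | EMul of ex & ex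
 | EBmp of {poly R} & ex.

Fixpoint ev (e : ex) (x : V) : R :=
  match e with
  | ECst c => c
  | ECrd i => x ord0 i
  | EAdd a b => ev a x + ev b x
  | EMul a b => ev a x * ev b x
  | EBmp P a => ef P (ev a x)
  end.

Fixpoint dx (v : V) (e : ex) : ex :=
  match e with
  | ECst c => ECst 0
  | ECrd i => ECst (v ord0 i)
  | EAdd a b => EAdd (dx v a) (dx v b)
  | EMul a b => EAdd (EMul (dx v a) b) (EMul a (dx v b))
  | EBmp P a => EMul (EBmp (dP P) a) (dx v a)
  end.

Lemma is_derive_nearcst (f : V -> R) x v c :
  (\forall h \near (0:R)^', h^-1 *: (f (h *: v + x) - f x) = c) ->
  is_derive x v f c.
Proof.
move=> H.
have Hd : derivable f x v by exact: (is_cvg_near_cst c).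
split => //; exact: (lim_near_cst _ H).
Qed.

Lemma line_derive (f : V -> R) x v df :
  is_derive (0:R) (1:R) (fun h : R => f (h *: v + x)) df -> is_derive x v f df.
Proof.
have E : (fun h : R => h^-1 *: (((fun h : R => f (h *: v + x)) \o shift 0) (h *: 1)
      - (fun h : R => f (h *: v + x)) 0))
   = (fun h : R => h^-1 *: ((f \o shift x) (h *: v) - f x)).
  by apply/funext => h /=; rewrite addr0 scale0r add0r [h *: 1]mulr1.
case=> d e; have d' : derivable f x v by move: d; rewrite /derivable E.
split => //; move: e; by rewrite /derive E.
Qed.

Lemma derive_line (f : V -> R) x v df :
  is_derive x v f df -> is_derive (0:R) (1:R) (fun h : R => f (h *: v + x)) df.
Proof.
have E : (fun h : R => h^-1 *: (((fun h : R => f (h *: v + x)) \o shift 0) (h *: 1)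
      - (fun h : R => f (h *: v + x)) 0))
   = (fun h : R => h^-1 *: ((f \o shift x) (h *: v) - f x)).
  by apply/funext => h /=; rewrite addr0 scale0r add0r [h *: 1]mulr1.
case=> d e; have d' : derivable (fun h : R => f (h *: v + x)) 0 1.
  by rewrite /derivable E.
split => //; move: e; by rewrite /derive E.
Qed.

Lemma ev_derive e x v : is_derive x v (ev e) (ev (dx v e) x).
Proof.
elim: e x => [c|i|a IHa b IHb|a IHa b IHb|P a IHa] x /=.
- exact: is_derive_cst.
- apply: is_derive_nearcst; near=> h.
  rewrite !mxE addrK /GRing.scale /= mulrA mulVf ?mul1r //.
  near: h; exact: nbhs_dnbhs_neq.
- exact: (is_deriveD (IHa x) (IHb x)).
- apply: (is_derive_eq (is_deriveM (IHa x) (IHb x))).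
  rewrite /GRing.scale /=; ring.
- apply: line_derive.
  have h1 := derive_line (IHa x).
  have h2 : is_derive ((fun h : R => ev a (h *: v + x)) 0) 1 (ef P)
              (ef (dP P) (ev a x)).
    by rewrite /= scale0r add0r; exact: ef_derive.
  have := is_derive1_comp h2 h1.
  by [].
Unshelve. all: by end_near. Qed.
End Syn.

Section Syn2.
Variables (R : realType) (n : nat).
Local Notation V := 'rV[R]_n.

Lemma ef_cont (P : {poly R}) : continuous (ef P).
Proof.
move=> t; apply: differentiable_continuous; apply/derivable1_diffP.
by case: (ef_derive P t).
Qed.

Lemma ev_cont (e : ex R n) : continuous (ev e).
Proof.
elim: e => [c|i|a IHa b IHb|a IHa b IHb|P a IHa] x /=.
- exact: cst_continuous.
- exact: (@coord_continuous R 1 n ord0 i).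
- exact: (continuousD (IHa x) (IHb x)).
- exact: (continuousM (IHa x) (IHb x)).
- apply: continuous_comp; [exact: IHa | exact: ef_cont].
Qed.

Definition dxs (vs : seq V) (e : ex R n) := foldr (fun v e => dx v e) e vs.

Lemma iterD_ev (vs : seq V) (e : ex R n) : iterD vs (ev e) = ev (dxs vs e).
Proof.
elim: vs => [//|v vs IH] /=.
rewrite IH; apply/funext => x.
by have [] := ev_derive (dxs vs e) x v.
Qed.

Lemma dx_scale (e : ex R n) s v x : ev (dx (s *: v) e) x = s * ev (dx v e) x.
Proof.
elim: e => [c|i|a IHa b IHb|a IHa b IHb|P a IHa] /=.
- by rewrite mulr0.
- by rewrite mxE.
- by rewrite IHa IHb mulrDr.
- rewrite IHa IHb; ring.
- rewrite IHa; ring.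
Qed.

Lemma aff_derive (E : ex R n) (c s : R) (a z v : V) :
  is_derive z v (fun w => c * ev E (s *: (w - a)))
    (c * s * ev (dx v E) (s *: (z - a))).
Proof.
apply: line_derive.
have h1 := derive_line (ev_derive E (s *: (z - a)) (s *: v)).
have -> : (fun h : R => c * ev E (s *: (h *: v + z - a)))
   = (fun h => c * (fun h : R => ev E (h *: (s *: v) + s *: (z - a))) h).
  apply/funext => h /=; congr (_ * ev E _).
  by rewrite -addrA scalerDr !scalerA mulrC.
have := is_deriveZ c h1.
rewrite dx_scale /GRing.scale /= mulrA => H.
exact: H.
Qed.

Lemma iterD_aff (vs : seq V) (E : ex R n) (c s : R) (a : V) :
  iterD vs (fun w => c * ev E (s *: (w - a)))
  = fun w => (c * s ^+ size vs) * ev (dxs vs E) (s *: (w - a)).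
Proof.
elim: vs => [|v vs IH] /=; first by apply/funext => w; rewrite mulr1.
rewrite IH; apply/funext => w.
have [_ ->] := aff_derive (dxs vs E) (c * s ^+ size vs) s a w v.
by rewrite exprS; congr (_ * _); ring.
Qed.

Lemma iterD_cst0 (vs : seq V) : iterD vs (cst (0:R) : V -> R) = cst 0.
Proof.
elim: vs => [//|v vs IH] /=; rewrite IH; apply/funext => x; exact: derive_cst.
Qed.

Lemma iterD_loc (f g : V -> R) (W : set V) : open W ->
  (forall w, W w -> f w = g w) -> forall vs w, W w -> iterD vs f w = iterD vs g w.
Proof.
move=> oW fg; elim => [|v vs IH] w Ww /=; first exact: fg.
apply: near_eq_derive.
have Wn : nbhs w W by apply: open_nbhs_nbhs; split.
near=> z; apply: IH; near: z; exact: Wn.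
Unshelve. all: by end_near. Qed.

Lemma coord_le (y : V) i : `|y ord0 i| <= `|y|.
Proof.
rewrite [leRHS]/Num.norm /= mx_normrE.
exact: (@le_bigmax _ _ _ 0 (fun ij : 'I_1 * 'I_n => `|y ij.1 ij.2|) (ord0, i)).
Qed.

Lemma norm_lt1 (y : V) : (forall i, `|y ord0 i| < 1) -> `|y| < 1.
Proof.
move=> H; rewrite [ltLHS]/Num.norm /= mx_normrE.
apply: bigmax_lt => // -[i j] _ /=.
by rewrite (ord1 i); apply: H.
Qed.

Lemma ev_bnd (e : ex R n) : exists S, 0 <= S /\ forall y : V, `|y| <= 1 -> `|ev e y| <= S.
Proof.
elim: e => [c|i|a [Sa [Sa0 Ha]] b [Sb [Sb0 Hb]]|a [Sa [Sa0 Ha]] b [Sb [Sb0 Hb]]|P a _] /=.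
- by exists `|c|.
- exists 1; split => // y y1; exact: le_trans (coord_le y i) y1.
- exists (Sa + Sb); split; first exact: addr_ge0.
  move=> y y1; apply: (le_trans (ler_normD _ _)); exact: lerD (Ha y y1) (Hb y y1).
- exists (Sa * Sb); split; first exact: mulr_ge0.
  move=> y y1; rewrite normrM; exact: ler_pM (Ha y y1) (Hb y y1).
- have [K [K0 HK]] := ef_bound P.
  exists K; split => // y _; by case: (HK (ev a y)).
Qed.

End Syn2.

Section Bump.
Variables (R : realType) (n : nat).
Local Notation V := 'rV[R]_n.

Definition sumsq : ex R n :=
  foldr (fun i acc => EAdd (EMul (@ECrd R n i) (@ECrd R n i)) acc) (@ECst R n 0) (enum 'I_n).
Definition u0 : ex R n := EAdd (@ECst R n (2^-1)) (EMul (@ECst R n (-1)) sumsq).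
Definition e0 : ex R n := EBmp 1 u0.

Lemma ev_sumsq (y : V) : ev sumsq y = \sum_(i < n) y ord0 i ^+ 2.
Proof.
rewrite /sumsq -big_enum /=.
elim: (enum 'I_n) => [|i s IH] /=; first by rewrite big_nil.
by rewrite big_cons IH expr2.
Qed.

Lemma bump_pos : 0 < ev e0 (0 : V).
Proof.
rewrite /= ev_sumsq big1 ?mulr0 ?addr0; last by move=> i _; rewrite mxE expr0n.
rewrite /ef invr_gt0 ltr0n /= hornerC mul1r; exact: expR_gt0.
Qed.

Lemma u0_neg (y : V) : 1 <= `|y| -> ev u0 y < 0.
Proof.
move=> y1.
have [i Hi] : exists i, 1 <= `|y ord0 i|.
  apply/not_existsP => H; move: y1; apply/negP; rewrite -ltNge.
  apply: norm_lt1 => i; rewrite ltNge; apply/negP => h; exact: (H i).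
have Hs : y ord0 i ^+ 2 <= \sum_(j < n) y ord0 j ^+ 2.
  rewrite (bigD1 i) //= lerDl; apply: sumr_ge0 => j _; exact: sqr_ge0.
have H1 : 1 <= y ord0 i ^+ 2.
  by rewrite -real_normK ?num_real // exprn_ege1.
rewrite /= ev_sumsq; lra.
Qed.

Lemma bump_supp (vs : seq V) (y : V) : 1 <= `|y| -> ev (dxs vs e0) y = 0.
Proof.
move=> y1; rewrite -iterD_ev.
have oW : open [set z : V | ev u0 z < 0].
  have -> : [set z : V | ev u0 z < 0] = ev u0 @^-1` [set x | x < 0] by [].
  apply: open_comp; last exact: open_lt.
  move=> z _; exact: ev_cont.
have := @iterD_loc R n (ev e0) (cst 0) _ oW.
move=> /(_ _ vs y (u0_neg y1)); rewrite iterD_cst0 => -> //.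
move=> w /= Hw; rewrite /ef; case: ifPn => //; by rewrite ltNge ltW.
Qed.

Lemma bump_bnd (vs : seq V) : exists S, 0 <= S /\ forall y : V, `|ev (dxs vs e0) y| <= S.
Proof.
have [S [S0 HS]] := ev_bnd (dxs vs e0).
exists S; split => // y.
have [y1|y1] := leP `|y| 1; first exact: HS.
by rewrite bump_supp ?normr0 // ltW.
Qed.

End Bump.

Section Constr.
Variables (R : realType) (n : nat).
Local Notation V := 'rV[R]_n.
Variables (p : V) (x : nat -> V) (r : nat -> R).
Hypothesis Hr : forall k, 0 < r k.
Hypothesis Hrd : forall k, 10 * r k <= `|x k - p|.
Hypothesis Hdd : forall k, 10 * `|x k.+1 - p| <= `|x k - p|.
Hypothesis Hd0 : `|x 0%N - p| <= 1.

Definition Bl k (w : V) := `|w - x k| < r k.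
Definition cc k := expR (- (r k)^-1).
Definition ss k := (r k)^-1.
Definition gk k (w : V) := (- cc k) * ev (e0 R n) (ss k *: (w - x k)).
Definition kf (w : V) := xget 0%N [set k | Bl k w].
Definition fF (w : V) := gk (kf w) w.

Lemma d_nonincr k : `|x k.+1 - p| <= `|x k - p|.
Proof. have := Hdd k; have := normr_ge0 (x k.+1 - p); lra. Qed.

Lemma d_lt j k : (j < k)%N -> 10 * `|x k - p| <= `|x j - p|.
Proof.
elim: k => [//|k IH]; rewrite ltnS leq_eqVlt => /orP[/eqP -> //|jk].
have := IH jk; have := d_nonincr k; have := normr_ge0 (x k.+1 - p); lra.
Qed.

Lemma tri (a b c : V) : `|a - c| <= `|a - b| + `|b - c|.
Proof. exact: ler_distD. Qed.

Lemma Bl_disj j k w : Bl j w -> Bl k w -> j = k.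
Proof.
wlog jk : j k / (j <= k)%N.
  move=> H Hj Hk; case/orP: (leq_total j k) => h; first exact: H.
  by apply/esym; apply: H.
rewrite leq_eqVlt in jk; case/orP: jk => [/eqP //|jk].
rewrite /Bl => Hj Hk.
have := d_lt jk; have := Hrd j; have := Hrd k; have := Hr j; have := Hr k.
have := tri (x j) w p; have := tri w (x k) p.
rewrite (distrC (x j) w); intros; exfalso; lra.
Qed.

Lemma sep (z : V) j k w1 w2 : `|z - w1| < `|z - p| / 10 -> `|z - w2| < `|z - p| / 10 ->
  Bl j w1 -> Bl k w2 -> j = k.
Proof.
wlog jk : j k w1 w2 / (j <= k)%N.
  move=> H H1 H2 Hj Hk; case/orP: (leq_total j k) => h; first exact: (H j k w1 w2).
  by apply/esym; apply: (H k j w2 w1).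
rewrite leq_eqVlt in jk; case/orP: jk => [/eqP //|jk].
rewrite /Bl => H1 H2 Hj Hk.
have := d_lt jk; have := Hrd j; have := Hrd k; have := Hr j; have := Hr k.
have := tri (x j) w1 p; have := tri w1 z p; have := tri z w1 p.
have := tri w2 (x k) p; have := tri z w2 p.
rewrite (distrC (x j) w1) (distrC w1 z); intros; exfalso; lra.
Qed.

Lemma ss_gt0 k : 0 < ss k. Proof. by rewrite invr_gt0. Qed.

Lemma gk_out k w : ~ Bl k w -> gk k w = 0.
Proof.
move=> H; rewrite /gk.
have : 1 <= `|ss k *: (w - x k)|.
  rewrite normrZ gtr0_norm ?ss_gt0 // /ss ler_pdivlMl // mulr1.
  by rewrite leNgt; apply/negP.
by move/(@bump_supp R n [::]) => /= ->; rewrite mulr0.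
Qed.

Lemma fF_eq w k : (forall j, Bl j w -> j = k) -> fF w = gk k w.
Proof.
move=> H; rewrite /fF.
have [Bk|Bk] := pselect (Bl k w).
  have : Bl (kf w) w by apply: (@xgetPex _ 0%N [set k | Bl k w]); exists k.
  by move/H => ->.
rewrite gk_out ?gk_out //.
move=> Bf; apply: Bk; have := H _ Bf; by move=> <-.
Qed.

Lemma fF_zero w : (forall j, ~ Bl j w) -> fF w = 0.
Proof. by move=> H; rewrite /fF gk_out. Qed.

Lemma fF_xk k : fF (x k) < 0.
Proof.
have Bk : Bl k (x k) by rewrite /Bl subrr normr0.
rewrite (@fF_eq _ k); last by move=> j Bj; exact: Bl_disj Bj Bk.
rewrite /gk subrr scaler0 mulNr oppr_lt0; apply: mulr_gt0; first exact: expR_gt0.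
exact: bump_pos.
Qed.

Lemma p_out j : ~ Bl j p.
Proof. rewrite /Bl distrC; have := Hrd j; have := Hr j; lra. Qed.



Lemma Bl_far k w : Bl k w -> r k <= `|w - p|.
Proof.
rewrite /Bl => H; have := Hrd k; have := Hr k; have := tri (x k) w p.
rewrite (distrC (x k) w); lra.
Qed.

Lemma loc (z : V) : z != p -> exists2 W : set V, (open W /\ W z) &
  ((forall w, W w -> fF w = 0) \/ exists k, forall w, W w -> fF w = gk k w).
Proof.
move=> zp; have rho0 : 0 < `|z - p| / 10 by rewrite divr_gt0 // normr_gt0 subr_eq0.
exists (ball z (`|z - p| / 10)).
  split; first exact: ball_open.
  exact: ballxx.
have HW w : ball z (`|z - p| / 10) w -> `|z - w| < `|z - p| / 10.
  by rewrite -ball_normE.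
have [[k [w0 [W0 B0]]]|H] := pselect (exists k w, ball z (`|z - p| / 10) w /\ Bl k w).
  right; exists k => w Ww; apply: fF_eq => j Bj.
  exact: (@sep z j k w w0 (HW _ Ww) (HW _ W0) Bj B0).
left => w Ww; apply: fF_zero => j Bj; apply: H; by exists j, w.
Qed.

Lemma ccss k m : cc k * ss k ^+ m = ef ('X^m) (r k).
Proof. by rewrite /ef Hr hornerXn /cc /ss mulrC. Qed.

Lemma fbound (vs : seq V) : exists K, 0 <= K /\
  forall z, z != p -> `|iterD vs fF z| <= K * `|z - p| ^+ 2.
Proof.
have [S [S0 HS]] := bump_bnd vs.
have [Kq [Kq0 HKq]] := ef_sq ('X^(size vs) : {poly R}).
exists (Kq * S); split; first exact: mulr_ge0.
move=> z zp; have [W [oW Wz] [H0|[k Hk]]] := loc zp.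
  rewrite (iterD_loc oW H0 vs Wz) (_ : (fun _ => 0) = cst 0) // iterD_cst0 normr0.
  by rewrite mulr_ge0 ?mulr_ge0 ?exprn_ge0.
rewrite (iterD_loc oW Hk vs Wz) /gk iterD_aff.
have [Bk|Bk] := pselect (Bl k z); last first.
  rewrite bump_supp ?mulr0 ?normr0 ?mulr_ge0 ?exprn_ge0 //.
  rewrite normrZ gtr0_norm ?ss_gt0 // /ss ler_pdivlMl // mulr1.
  by rewrite leNgt; apply/negP.
rewrite normrM mulNr normrN ccss.
have h1 := HKq (r k); rewrite subr0 in h1.
have h2 := HS (ss k *: (z - x k)).
have h3 := Bl_far Bk.
have rk0 := Hr k.
have : `|ef 'X^(size vs) (r k)| * `|ev (dxs vs (e0 R n)) (ss k *: (z - x k))|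
   <= (Kq * `|r k| ^+ 2) * S.
  by apply: ler_pM => //; apply: normr_ge0.
move/le_trans; apply.
rewrite gtr0_norm //.
have h4 : r k ^+ 2 <= `|z - p| ^+ 2.
  by rewrite ler_pXn2r // ?nnegrE ?normr_ge0 // ltW.
have := ler_wpM2l (mulr_ge0 Kq0 S0) h4.
by rewrite [Kq * r k ^+ 2 * S]mulrAC -mulrA.
Qed.



Lemma fball (vs : seq V) : iterD vs fF p = 0 -> exists K, 0 <= K /\
  forall z, `|iterD vs fF z| <= K * `|z - p| ^+ 2.
Proof.
move=> H0; have [K [K0 HK]] := fbound vs; exists K; split => // z.
have [->|zp] := eqVneq z p; last exact: HK.
by rewrite H0 normr0 mulr_ge0 // exprn_ge0.
Qed.

Lemma fp_val (vs : seq V) : iterD vs fF p = 0.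
Proof.
elim: vs => [|v vs IH] /=; first by apply: fF_zero; exact: p_out.
have [K [K0 HK]] := fball IH.
by have [] := is_derive_small v K0 IH HK.
Qed.

Lemma cont_small (G : V -> R) K : 0 <= K -> G p = 0 ->
  (forall z, `|G z| <= K * `|z - p| ^+ 2) -> {for p, continuous G}.
Proof.
move=> K0 Gp HG.
rewrite /continuous_at; apply/(@cvgrPdist_lt _ _ _ (nbhs p) (nbhs_filter p)) => e e0.
have d0 : 0 < Num.min 1 (e / (K + 1)) by rewrite lt_min ltr01 divr_gt0 // ltr_wpDl.
near=> z.
have hz : ball p (Num.min 1 (e / (K + 1))) z.
  near: z; change (\forall x0 \near p, ball p (Num.min 1 (e / (K + 1))) x0).
  exact: (near_ball p _ d0).
rewrite -ball_normE /= in hz.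
rewrite Gp sub0r normrN; apply: (le_lt_trans (HG z)).
rewrite distrC in hz; move: hz; rewrite lt_min => /andP[h1 h2].
set d := `|z - p| in h1 h2 *.
have d0' : 0 <= d by apply: normr_ge0.
have : d ^+ 2 <= d by rewrite expr2 ler_piMl // ltW.
move=> hd.
have : K * d ^+ 2 <= K * d by apply: ler_wpM2l.
move/le_lt_trans; apply.
have : K * d <= (K + 1) * d by apply: ler_wpM2r => //; lra.
move/le_lt_trans; apply.
by rewrite mulrC -ltr_pdivlMr // ltr_wpDl.
Unshelve. all: by end_near. Qed.

Lemma near_cont (F G : V -> R) z : {near z, G =1 F} -> {for z, continuous G} ->
  {for z, continuous F}.
Proof.
move=> H C; have Fz : G z = F z := nbhs_singleton H.
have E : F @ z --> G z by apply: (cvg_trans _ C); exact: (near_eq_cvg H).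
by move: E; rewrite Fz.
Qed.

Lemma fF_smooth : smooth_on setT fF.
Proof.
split; first exact: openT.
move=> vs; split.
  move=> z _; have [->|zp] := eqVneq z p.
    have [K [K0 HK]] := fball (fp_val vs).
    exact: cont_small K0 (fp_val vs) HK.
  have [W [oW Wz] [H0|[k Hk]]] := loc zp.
    have Wn : nbhs z W by apply: open_nbhs_nbhs; split.
    apply: (near_cont (G := iterD vs (cst 0))).
      near=> w; symmetry; apply: (iterD_loc oW H0 vs); near: w; exact: Wn.
    by rewrite iterD_cst0; exact: cst_continuous.
  have Wn : nbhs z W by apply: open_nbhs_nbhs; split.
  apply: (near_cont (G := iterD vs (gk k))).
    near=> w; symmetry; apply: (iterD_loc oW Hk vs); near: w; exact: Wn.
  rewrite /gk iterD_aff.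
  apply: continuousM; first exact: cst_continuous.
  apply: continuous_comp; last exact: ev_cont.
  apply: continuousZl_tmp; apply: continuousB; [exact: cvg_id|exact: cst_continuous].
move=> v z _; have [->|zp] := eqVneq z p.
  have [K [K0 HK]] := fball (fp_val vs).
  by have [] := is_derive_small v K0 (fp_val vs) HK.
have [W [oW Wz] [H0|[k Hk]]] := loc zp.
  have Wn : nbhs z W by apply: open_nbhs_nbhs; split.
  apply: (@near_eq_derivable _ _ _ (iterD vs (cst 0))).
    near=> w; symmetry; apply: (iterD_loc oW H0 vs); near: w; exact: Wn.
  by rewrite iterD_cst0; exact: derivable_cst.
have Wn : nbhs z W by apply: open_nbhs_nbhs; split.
apply: (@near_eq_derivable _ _ _ (iterD vs (gk k))).
  near=> w; symmetry; apply: (iterD_loc oW Hk vs); near: w; exact: Wn.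
rewrite /gk iterD_aff.
by have [] := aff_derive (dxs vs (e0 R n)) (- cc k * ss k ^+ size vs) (ss k) (x k) z v.
Unshelve. all: by end_near. Qed.

End Constr.

Section SeqC.
Variables (R : realType) (n : nat).
Local Notation V := 'rV[R]_n.

Lemma seq_constr (p : V) (X C : set V) : closed C -> C p ->
  (forall e : R, 0 < e -> exists x, X x /\ ~ C x /\ `|x - p| < e) ->
  exists f : V -> R, smooth_on setT f /\ (forall w, C w -> f w = 0) /\
    (forall e : R, 0 < e -> exists x, X x /\ `|x - p| < e /\ f x < 0).
Proof.
move=> cC Cp Hpts.
have t0 : (0:R) < 10 by rewrite ltr0n.
have H1 : forall e : R, exists x : V, 0 < e -> X x /\ ~ C x /\ `|x - p| < e.
  move=> e; have [e0|e0] := ltP 0 e; last by exists p => h; exfalso; lra.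
  by have [x Hx] := Hpts e e0; exists x.
have [pick Hpick] := choice H1.
have H2 : forall x : V, exists r : R, ~ C x -> 0 < r /\ forall w, `|w - x| < r -> ~ C w.
  move=> x.
  have [Cx|nCx] := pselect (C x); first by exists 0.
  have : nbhs x (~` C) by apply: open_nbhs_nbhs; split => //; exact: closed_openC.
  move/nbhs_ballP => [r r0 Hr]; exists r => _; split => // w Hw; apply: Hr.
  by rewrite -ball_normE /= distrC.
have [rho Hrho] := choice H2.
pose xs k := iter k (fun x => pick (`|x - p| / 10)) (pick 1).
have HX : forall k, X (xs k) /\ ~ C (xs k) /\ 0 < `|xs k - p|.
  have pos x : ~ C x -> 0 < `|x - p|.
    move=> nCx; rewrite normr_gt0 subr_eq0; apply/negP => /eqP E; apply: nCx; by rewrite E.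
  elim => [|k [_ [nCk dk]]].
    have [h1 [h2 _]] := Hpick 1 ltr01; split => //; split => //; exact: pos.
  have [h1 [h2 _]] := Hpick (`|xs k - p| / 10) (divr_gt0 dk t0).
  rewrite /xs iterS -/(xs k); split => //; split => //; exact: pos.
pose rs k := Num.min (`|xs k - p| / 10) (rho (xs k)).
have Hr : forall k, 0 < rs k.
  move=> k; have [_ [nC dk]] := HX k; rewrite lt_min divr_gt0 //=.
  by case: (Hrho _ nC).
have Hrd : forall k, 10 * rs k <= `|xs k - p|.
  move=> k; have : rs k <= `|xs k - p| / 10 by rewrite ge_min lexx.
  by rewrite ler_pdivlMr // mulrC.
have Hdd : forall k, 10 * `|xs k.+1 - p| <= `|xs k - p|.
  move=> k; have [_ [_ dk]] := HX k.
  have [_ [_ h]] := Hpick (`|xs k - p| / 10) (divr_gt0 dk t0).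
  rewrite /xs iterS -/(xs k); move: h; rewrite ltr_pdivlMr // mulrC => /ltW //.
have Hd0 : `|xs 0%N - p| <= 1.
  by have [_ [_ h]] := Hpick 1 ltr01; apply: ltW.
exists (fF xs rs); split; first exact: (fF_smooth Hr Hrd Hdd).
split.
  move=> w Cw; apply: (fF_zero Hr) => j; rewrite /Bl => Hj.
  have [_ [nCj _]] := HX j; have [_ Hw] := Hrho _ nCj.
  apply: (Hw w) => //; apply: (lt_le_trans Hj); by rewrite ge_min lexx orbT.
move=> e e0.
have Hdk : forall k, `|xs k - p| <= (k.+1%:R)^-1.
  elim => [|k IH]; first by rewrite invr1.
  have := Hdd k; have hk : 0 < k.+1%:R :> R by rewrite ltr0n.
  have hk2 : 0 < k.+2%:R :> R by rewrite ltr0n.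
  move=> h; have h' := le_trans h IH.
  move: h'; rewrite -div1r ler_pdivlMr // -div1r ler_pdivlMr //.
  have -> : k.+2%:R = k.+1%:R + 1 :> R by rewrite -addn1 natrD.
  have a1 : 1 <= k.+1%:R :> R by rewrite ler1n.
  have d0 := normr_ge0 (xs k.+1 - p).
  move=> H; nra.
have [k Hk] : exists k : nat, (k.+1%:R)^-1 < e.
  exists (Num.truncn e^-1); rewrite -[ltRHS]invrK ltf_pV2 ?posrE ?invr_gt0 ?ltr0n //.
  exact: truncnS_gt.
have [HXk [_ _]] := HX k.
exists (xs k); split => //; split; first exact: le_lt_trans (Hdk k) Hk.
exact: (fF_xk Hr Hrd Hdd).
Qed.
End SeqC.

Lemma within_open_cont (T U : topologicalType) (A : set T) (f : T -> U) x :
  open A -> A x -> {within A, continuous f} -> {for x, continuous f}.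
Proof.
move=> oA Ax /subspace_continuousP /(_ x Ax).
rewrite within_interior //; by rewrite ((interior_id A).1 oA).
Qed.

Lemma local_cpt (R : realType) (d n : nat) (M : topologicalType)
    (At : set (chart R d M)) (HM : smooth_manifold At)
    (phi : M -> 'rV[R]_n) (Hphi : smooth_map At phi) (y : M) (N : set M) :
  nbhs y N -> exists K (C : set 'rV[R]_n), [/\ nbhs y K, closed C, C (phi y),
    (forall u, K u -> C (phi u)) & (forall w, C w -> (phi @` N) w)].
Proof.
move=> Ny.
have [_ _ [Hch Hcov _]] := HM.
have [c Atc yd] := Hcov y.
have [odom oimg linv cm ci] := Hch c Atc.
set m := ch_map c in oimg linv cm ci *.
set io := ch_inv c in linv ci *.
set D := ch_dom c in odom linv cm ci yd *.
set O := m @` D in oimg ci *.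
have Oz : O (m y) by exists y.
have ioz : io (m y) = y := linv y yd.
have [_ Hs2] := Hphi c Atc.
have [Hcont _] := Hs2 [::].
have cio : {for m y, continuous io} := within_open_cont oimg Oz ci.
have cmy : {for y, continuous m} := within_open_cont odom yd cm.
have N1 : nbhs (m y) (io @^-1` N).
  by apply: cio; rewrite ioz.
have N2 : nbhs (m y) O by apply: open_nbhs_nbhs; split.
have [del del0 Hdel] := (nbhs_ballP _ _).1 (filterI N1 N2).
set B' := closed_ball_ Num.norm (m y) (del / 2).
have Bball : forall w, B' w -> ball (m y) del w.
  move=> w; rewrite /B' /closed_ball_ -ball_normE /= => h.
  apply: (le_lt_trans h); rewrite ltr_pdivrMr // ltr_pMr //.
  by rewrite ltr1n.
pose C := (phi \o io) @` B'.
have cC : closed C.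
  apply: compact_closed; first exact: norm_hausdorff.
  apply: continuous_compact.
    apply: continuous_in_subspaceT => w; rewrite inE => Bw.
    have [_ Ow] := Hdel w (Bball w Bw).
    exact: (Hcont w Ow).
  apply: bounded_closed_compact; last exact: closed_closed_ball_.
  change (\forall Mb \near +oo, globally B' [set x : 'rV[R]_d | `|x| <= Mb]).
  near=> Mb => w Bw /=.
  have : `|w| <= `|m y| + `|m y - w|.
    by rewrite -{1}(subKr (m y) w) ; apply: (le_trans (ler_normB _ _)); rewrite distrC.
  move/le_trans; apply.
  have : `|m y - w| <= del / 2 by exact: Bw.
  move=> h; apply: (le_trans (lerD (lexx _) h)).
  near: Mb; apply: nbhs_pinfty_ge; exact: num_real.
exists (D `&` m @^-1` ball (m y) (del / 2)), C; split => //.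
- apply: filterI; first by apply: open_nbhs_nbhs; split.
  apply: cmy; apply: nbhsx_ballx; exact: divr_gt0.
- exists (m y); last by rewrite /= ioz.
  by rewrite /B' /closed_ball_ /= subrr normr0 divr_ge0 // ltW.
- move=> u [Du Bu]; exists (m u); last by rewrite /= linv.
  by move: Bu; rewrite /B' /closed_ball_ -ball_normE /= => /ltW.
- move=> w [v Bv <-]; have [Nv _] := Hdel v (Bball v Bv).
  by exists (io v).
Unshelve. all: by end_near. Qed.

Lemma open_local (R : realType) (M E : topologicalType) (phi : M -> E) (y : M) :
  open_at phi y -> local_local R phi y.
Proof.
move=> Ho f _ [U Uy HU]; split; first by exists y.
exists (phi @` U); first exact: Ho.
by move=> _ [u Uu <-] _; exact: HU.
Qed.

Lemma not_open_construct (R : realType) (d n : nat) (M : topologicalType)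
    (At : set (chart R d M)) (HM : smooth_manifold At)
    (phi : M -> 'rV[R]_n) (Hphi : smooth_map At phi) (y : M) :
  ~ open_at phi y ->
     exists f : 'rV[R]_n -> R,
       smooth_on setT f /\
       local_min (f \o phi) y /\
       ~ local_min_in (range phi) f (phi y).
Proof.
move=> /existsNP [N /not_implyP [Ny HN]].
have [K [C [Ky cC Cp HK HC]]] := local_cpt HM Hphi Ny.
have Hpts : forall e : R, 0 < e -> exists x, range phi x /\ ~ C x /\ `|x - phi y| < e.
  move=> e e0; apply: contrapT => H; apply: HN; split; first by exists y.
  exists (ball (phi y) e); first exact: nbhsx_ballx.
  move=> x [Bx Xx]; apply: contrapT => nN; apply: H; exists x; split => //.
  split; first by move/HC.
  by move: Bx; rewrite -ball_normE /= distrC.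
have [f [sf [f0 fneg]]] := seq_constr cC Cp Hpts.
exists f; split => //; split.
  exists K => // u Ku /=; by rewrite !f0 //; apply: HK.
move=> [_ [S [_ [V Vp VS]] HS]].
have [e e0 He] := (nbhs_ballP _ _).1 Vp.
have [x [Xx [dx fx]]] := fneg e e0.
have Sx : S x by apply: VS; split => //; apply: He; rewrite -ball_normE /= distrC.
have := HS x Sx Xx; rewrite f0 //; lra.
Qed.

Unset Implicit Arguments.
Set Strict Implicit.
Set Printing Implicit Defensive.
Theorem theorem2p3 (R : realType) (d n : nat) (M : topologicalType)
    (At : set (chart R d M)) (HM : smooth_manifold At)
    (phi : M -> 'rV[R]_n) (Hphi : smooth_map At phi) (y : M) :
  (local_local R phi y <-> open_at phi y) /\
  (~ local_local R phi y ->
     exists f : 'rV[R]_n -> R,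
       smooth_on setT f /\
       local_min (f \o phi) y /\
       ~ local_min_in (range phi) f (phi y)).
Proof.
split; last first.
  move=> nll; apply: (not_open_construct HM Hphi) => Ho; apply: nll.
  exact: open_local.
split; last exact: open_local.
move=> Hll; apply: contrapT => nO.
have [f [[_ sf] [lm nlm]]] := not_open_construct HM Hphi nO.
apply: nlm; apply: Hll => //.
apply: continuous_subspaceT => x; have [+ _] := sf [::]; by apply.
Qed.
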